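(* Let $K=\mathbb{Q}(\alpha,\sqrt{-2})$ where $\alpha$ is a root of $x^3-93x+124$ (the field $\Gamma_8$), let $F=\mathbb{Q}(\alpha)$, and $\rho$ complex conjugation. Let $\mathfrak{p}$ be a prime of $F$ above $2$ and $\mathfrak{P}$ the prime of $K$ above $\mathfrak{p}$ (one has $\mathfrak{p}\mathcal{O}_K=\mathfrak{P}^2$), and let $\chi_{\mathfrak{p}}:F_{\mathfrak{p}}^\times\to\{\pm1\}$ be the quadratic character associated with $K_{\mathfrak{P}}/F_{\mathfrak{p}}$. Then there exists a homomorphism $\widetilde{\chi_{\mathfrak{P}}}:\mathcal{O}_{K_{\mathfrak{P}}}^\times\to\{\pm1\}$ such that $\widetilde{\chi_{\mathfrak{P}}}|_{\mathcal{O}_{F_{\mathfrak{p}}}^\times}=\chi_{\mathfrak{p}}|_{\mathcal{O}_{F_{\mathfrak{p}}}^\times}$ and $\widetilde{\chi_{\mathfrak{P}}}(x^\rho)=\widetilde{\chi_{\mathfrak{P}}}(x)^\rho$ for all $x\in\mathcal{O}_{K_{\mathfrak{P}}}^\times$.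
   Context: $K$ is a CM field cyclic of degree 6 over $\mathbb{Q}$ with cubic subfield $F$; in $F$ the prime $2$ splits completely and each prime of $F$ above $2$ ramifies in $K$, so $\rho$ fixes $\mathfrak{P}$ and acts on $K_{\mathfrak{P}}$. *)

(* Defs.v *)
(* The 2-adic integers Z_2 are built from scratch as
   coherent sequences of residues modulo 2^n (the inverse limit of Z/2^n),
   and O_{K_P} = Z_2[sqrt(-2)] as pairs (a,b) <-> a + b*sqrt(-2). *)
From mathcomp Require Import all_boot all_algebra.
From mathcomp Require Import boolp.

Set Implicit Arguments.
Unset Strict Implicit.
Unset Printing Implicit Defensive.

Definition coh (f : nat -> nat) : Prop :=
  forall n, f n < 2 ^ n /\ f n.+1 %% 2 ^ n = f n.

Record Z2 := MkZ2 { z2d : nat -> nat ; z2coh : coh z2d }.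

Lemma coh_mod (h : nat -> nat) :
  (forall n, h n.+1 = h n %[mod 2 ^ n]) -> coh (fun n => h n %% 2 ^ n).
Proof.
move=> H n; split; first by rewrite ltn_pmod // expn_gt0.
rewrite (modn_dvdm _ (dvdn_exp2l 2 (leqnSn n))); exact: H.
Qed.

Definition z2mod (h : nat -> nat) (H : forall n, h n.+1 = h n %[mod 2 ^ n]) : Z2 :=
  MkZ2 (coh_mod H).

Lemma z2nat_coh (k : nat) : forall n, (fun _ : nat => k) n.+1 = k %[mod 2 ^ n].
Proof. by []. Qed.
Definition z2nat (k : nat) : Z2 := z2mod (z2nat_coh k).

Lemma z2m1_coh : coh (fun n => 2 ^ n - 1).
Proof.
move=> n; split; first by rewrite subn1 prednK ?expn_gt0 // leqnn.
have p0 : 0 < 2 ^ n by rewrite expn_gt0.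
rewrite expnS mul2n -addnn -addnBA // modnDl modn_small //.
by rewrite subn1 prednK // leqnn.
Qed.
Definition z2m1 : Z2 := MkZ2 z2m1_coh.

Lemma z2add_coh (x y : Z2) :
  forall n, z2d x n.+1 + z2d y n.+1 = z2d x n + z2d y n %[mod 2 ^ n].
Proof.
by move=> n; rewrite -modnDm ((z2coh x) n).2 ((z2coh y) n).2.
Qed.
Definition z2add (x y : Z2) : Z2 := z2mod (z2add_coh x y).

Lemma z2mul_coh (x y : Z2) :
  forall n, z2d x n.+1 * z2d y n.+1 = z2d x n * z2d y n %[mod 2 ^ n].
Proof.
by move=> n; rewrite -modnMm ((z2coh x) n).2 ((z2coh y) n).2.
Qed.
Definition z2mul (x y : Z2) : Z2 := z2mod (z2mul_coh x y).

Definition z2opp (x : Z2) : Z2 := z2mul z2m1 x.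
Definition z2sub (x y : Z2) : Z2 := z2add x (z2opp y).

Definition z2zero : Z2 := z2nat 0.
Definition z2one : Z2 := z2nat 1.

Definition Z2unit (u : Z2) : Prop := exists v, z2mul u v = z2one.

(* O_{K_P} = Z_2[sqrt(-2)] : (a, b) stands for a + b sqrt(-2) *)
Definition OK2 := (Z2 * Z2)%type.
Definition ok_mul (x y : OK2) : OK2 :=
  (z2sub (z2mul x.1 y.1) (z2mul (z2nat 2) (z2mul x.2 y.2)),
   z2add (z2mul x.1 y.2) (z2mul x.2 y.1)).
Definition ok_one : OK2 := (z2one, z2zero).
Definition ok_unit (x : OK2) : Prop := exists y, ok_mul x y = ok_one.
Definition ok_conj (x : OK2) : OK2 := (x.1, z2opp x.2).
Definition ok_norm (x : OK2) : Z2 :=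
  z2add (z2mul x.1 x.1) (z2mul (z2nat 2) (z2mul x.2 x.2)).
Definition ok_of_Z2 (u : Z2) : OK2 := (u, z2zero).

(* The quadratic character chi_p of F_p^x = Q_2^x attached to K_P/F_p,
   restricted to units: by local class field theory its kernel is the norm
   group N(K_P^x); a unit u of Z_2 lies in N(K_P^x) iff u = N(z) with z a
   unit of O_{K_P} (K_P/F_p is totally ramified, so v_2(N z) = v_P(z)). *)
Definition chi_p (u : Z2) : int :=
  if `[< exists z : OK2, ok_unit z /\ ok_norm z = u >] then 1%R else (-1)%R.

Definition cubic_at (a : Z2) : Z2 :=
  z2add (z2sub (z2mul a (z2mul a a)) (z2mul (z2nat 93) a)) (z2nat 124).

(* Main.v *)
Require Import Defs.
From mathcomp Require Import all_boot all_algebra.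
From mathcomp Require Import boolp.
From mathcomp Require Import zify ring.
Import GRing.Theory.
Local Open Scope ring_scope.

Lemma z2_ext (x y : Z2) : (forall n, z2d x n = z2d y n) -> x = y.
Proof.
case: x => f hf; case: y => g hg /= H.
have E : f = g by apply: funext.
subst g; by rewrite (Prop_irrelevance hf hg).
Qed.

Lemma z2d_lt (x : Z2) n : (z2d x n < 2 ^ n)%N.
Proof. exact: (z2coh x n).1. Qed.

Lemma z2d_modle (x : Z2) n m : (n <= m)%N -> (z2d x m %% 2 ^ n)%N = z2d x n.
Proof.
elim: m => [|m IH]; first by rewrite leqn0 => /eqP ->; rewrite modn_small ?z2d_lt.
rewrite leq_eqVlt => /orP [/eqP ->|]; first by rewrite modn_small ?z2d_lt.
rewrite ltnS => h; rewrite -(IH h).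
by rewrite -(z2coh x m).2 modn_dvdm // dvdn_exp2l.
Qed.

Definition pi n (x : Z2) : 'Z_(2 ^ n) := (z2d x n)%:R.

Lemma gt1 {n} : (0 < n)%N -> (1 < 2 ^ n)%N.
Proof. by move=> h; rewrite -{1}(expn0 2) ltn_exp2l. Qed.

Lemma pi_add n x y : (0 < n)%N -> pi n (z2add x y) = pi n x + pi n y.
Proof. by move=> h; rewrite /pi /= Zp_nat_mod ?gt1 // natrD. Qed.

Lemma pi_mul n x y : (0 < n)%N -> pi n (z2mul x y) = pi n x * pi n y.
Proof. by move=> h; rewrite /pi /= Zp_nat_mod ?gt1 // natrM. Qed.

Lemma pi_nat n k : (0 < n)%N -> pi n (z2nat k) = k%:R.
Proof. by move=> h; rewrite /pi /= Zp_nat_mod ?gt1. Qed.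

Lemma pi_m1 n : (0 < n)%N -> pi n z2m1 = -1.
Proof.
move=> h; rewrite /pi /= natrB ?expn_gt0 //.
have -> : (2 ^ n)%:R = 0 :> 'Z_(2 ^ n).
  by rewrite -Zp_nat_mod ?gt1 // modnn.
by rewrite sub0r.
Qed.

Lemma pi_eq (x y : Z2) : (forall n, (0 < n)%N -> pi n x = pi n y) -> x = y.
Proof.
move=> H; apply: z2_ext => -[|n].
  by have := z2d_lt x 0; have := z2d_lt y 0; rewrite expn0 !ltnS !leqn0 => /eqP -> /eqP ->.
have := H n.+1 erefl; rewrite /pi => E.
have := val_Zp_nat (gt1 (ltn0Sn n : (0 < n.+1)%N)) (z2d x n.+1).
rewrite E val_Zp_nat ?gt1 // => /esym.
by rewrite !modn_small ?z2d_lt.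
Qed.

Definition pis := (pi_add, pi_mul, pi_nat, pi_m1).

Lemma norm_unit (z : OK2) w : z2mul (ok_norm z) w = z2one ->
  ok_mul z (z2mul z.1 w, z2mul (z2opp z.2) w) = ok_one.
Proof.
move=> H; rewrite /ok_mul /ok_one /=; congr pair; apply: pi_eq => n n0;
  move: (congr1 (pi n) H); rewrite /ok_norm /z2one /z2sub /z2opp /z2zero !pis //.
  by move=> <-; ring.
by move=> _; ring.
Qed.

Fixpoint Tq (v : Z2) (k : nat) : nat :=
  match k with
  | 0 => 1%N
  | k'.+1 => let t := Tq v k' in
     if ((t * t) %% 2 ^ (k' + 4) == z2d v (k' + 4))%N then t else (t + 2 ^ (k' + 2))%N
  end.

Lemma modn_dvdz (a b M : nat) : (a %% M = b %% M)%N <-> (M%:Z %| a%:Z - b%:Z)%Z.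
Proof.
rewrite -eqz_mod_dvd !modz_nat; split => [->|/eqP []] //.
Qed.

Lemma Tq_inv v : z2d v 3 = 1%N -> forall k,
  [/\ (Tq v k < 2 ^ (k + 2))%N, odd (Tq v k) &
      ((Tq v k * Tq v k) %% 2 ^ (k + 3))%N = z2d v (k + 3)].
Proof.
move=> v3; elim => [|k [lt od sq]]; first by rewrite !add0n v3.
have e2' : (2 ^ (k + 2) = 2 ^ k * 4)%N by rewrite expnD.
have e2 : (2 ^ (k.+1 + 2) = 2 ^ k * 8)%N by rewrite addSn expnS e2'; lia.
have e3 : (2 ^ (k + 3) = 2 ^ k * 8)%N by rewrite expnD.
have e4 : (2 ^ (k + 4) = 2 ^ k * 16)%N by rewrite expnD.
have e3' : (k.+1 + 3 = k + 4)%N by lia.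
rewrite /= e3'; case: ifP => E.
  split => //; [rewrite e2; rewrite e2' in lt; lia | exact/eqP].
split.
- rewrite e2 e2'; rewrite e2' in lt; lia.
- by rewrite oddD od e2' oddM /= andbF.
set t := Tq v k; set w := z2d v (k + 4).
have wlt : (w < 2 ^ (k + 4))%N by apply: z2d_lt.
have sq' : ((t * t) %% 2 ^ (k + 3) = w %% 2 ^ (k + 3))%N.
  by rewrite sq /w z2d_modle //; lia.
move: sq'; rewrite modn_dvdz => /dvdzP [q Hq].
have wlt16 : (w < 2 ^ k * 16)%N by rewrite -e4.
rewrite -[w in RHS](modn_small wlt) e4; apply/(modn_dvdz _ w).
move: E; rewrite -/t -/w e4.
have tE : t = (2 * t./2 + 1)%N by rewrite -{1}(odd_double_half t) od -mul2n addnC.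
move: Hq; rewrite e3 e2' tE.
set X := (2 ^ k)%N; set s := t./2.
have [r [e [-> He]]] : exists r e, q = r * 2 + e /\ (e = 0 \/ e = 1).
  exists (q %/ 2)%Z, (q %% 2)%Z; split; first exact: divz_eq.
  have h0 := modz_ge0 q (isT : (2:int) != 0).
  have h1 := ltz_pmod q (isT : (0:int) < 2).
  lia.
case: He => -> Hq.
  move/negP => E; exfalso; apply: E; apply/eqP.
  rewrite -[w in RHS](modn_small wlt16); apply/(modn_dvdz _ w)/dvdzP.
  exists r; rewrite Hq !PoszM; ring.
move=> _; apply/dvdzP; exists (r + s%:Z + 1 + X%:Z).
rewrite !(PoszD, PoszM).
have -> : w%:Z = ((2 * s + 1) * (2 * s + 1))%N%:Z - (r * 2 + 1) * (X * 8)%N%:Z.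
  by rewrite -Hq; ring.
rewrite !(PoszD, PoszM); ring.
Qed.

Lemma Tq_coh v : forall n, Tq v n.+1 = Tq v n %[mod 2 ^ n].
Proof.
move=> n /=; case: ifP => // _.
by rewrite expnD [(2 ^ n * _)%N]mulnC addnC modnMDl.
Qed.

Lemma z2_sqrt v : z2d v 3 = 1%N -> exists a, z2mul a a = v.
Proof.
move=> v3; exists (z2mod (Tq_coh v)); apply: z2_ext => n /=.
rewrite modnMm -(modn_dvdm _ (dvdn_exp2l 2 (leq_addr 3 n))).
have [_ _ ->] := Tq_inv v v3 n.
by rewrite z2d_modle // leq_addr.
Qed.

Definition psi (a b : nat) : bool := ((a == 1)%N || (a == 3)%N) == (b %% 4 != 2)%N.
Definition chi (x : OK2) : int := if psi (z2d x.1 3) (z2d x.2 3) then 1 else -1.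

Definition M1 (a b c d : nat) : nat := ((((a * c) %% 8) + ((7 * (((2 %% 8) * ((b * d) %% 8)) %% 8)) %% 8)) %% 8)%N.
Definition M2 (a b c d : nat) : nat := ((((a * d) %% 8) + ((b * c) %% 8)) %% 8)%N.
Definition Nm (a b : nat) : nat := ((((a * a) %% 8) + (((2 %% 8) * ((b * b) %% 8)) %% 8)) %% 8)%N.

Lemma r_mul1 x y : z2d (ok_mul x y).1 3 = M1 (z2d x.1 3) (z2d x.2 3) (z2d y.1 3) (z2d y.2 3).
Proof. by []. Qed.
Lemma r_mul2 x y : z2d (ok_mul x y).2 3 = M2 (z2d x.1 3) (z2d x.2 3) (z2d y.1 3) (z2d y.2 3).
Proof. by []. Qed.
Lemma r_norm x : z2d (ok_norm x) 3 = Nm (z2d x.1 3) (z2d x.2 3).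
Proof. by []. Qed.
Lemma r_conj x : z2d (ok_conj x).2 3 = ((7 * z2d x.2 3) %% 8)%N.
Proof. by []. Qed.
Lemma r_z2mul x y : z2d (z2mul x y) 3 = ((z2d x 3 * z2d y 3) %% 8)%N.
Proof. by []. Qed.

Definition all8 (P : nat -> bool) := all P (iota 0 8).
Lemma all8P {P} : all8 P -> forall {a}, (a < 8)%N -> P a.
Proof. by move=> /allP H a ha; apply: H; rewrite mem_iota. Qed.

Lemma r8 x : (z2d x 3 < 8)%N.
Proof. exact: z2d_lt. Qed.

Lemma fin_mul a b c d : (a < 8)%N -> (b < 8)%N -> (c < 8)%N -> (d < 8)%N ->
  odd a -> odd c -> psi (M1 a b c d) (M2 a b c d) = (psi a b == psi c d).
Proof.
have H : all8 (fun a => all8 (fun b => all8 (fun c => all8 (fun d =>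
  odd a ==> odd c ==> (psi (M1 a b c d) (M2 a b c d) == (psi a b == psi c d)))))).
  by vm_compute.
move=> ha hb hc hd oa oc.
have := all8P (all8P (all8P (all8P H ha) hb) hc) hd.
by rewrite oa oc /= => /eqP.
Qed.

Lemma fin_unit a b c d : (a < 8)%N -> (b < 8)%N -> (c < 8)%N -> (d < 8)%N ->
  M1 a b c d = 1%N -> odd a.
Proof.
have H : all8 (fun a => all8 (fun b => all8 (fun c => all8 (fun d =>
  (M1 a b c d == 1)%N ==> odd a)))).
  by vm_compute.
move=> ha hb hc hd e.
have := all8P (all8P (all8P (all8P H ha) hb) hc) hd.
by rewrite e.
Qed.

Lemma fin_unitZ a c : (a < 8)%N -> (c < 8)%N -> ((a * c) %% 8 = 1)%N -> odd a.
Proof.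
have H : all8 (fun a => all8 (fun c => (((a * c) %% 8) == 1)%N ==> odd a)).
  by vm_compute.
move=> ha hc e.
have := all8P (all8P H ha) hc.
by rewrite e.
Qed.

Lemma fin_norm a b : (a < 8)%N -> (b < 8)%N -> odd a -> (Nm a b == 1)%N || (Nm a b == 3)%N.
Proof.
have H : all8 (fun a => all8 (fun b => odd a ==> (Nm a b == 1)%N || (Nm a b == 3)%N)).
  by vm_compute.
move=> ha hb oa.
have := all8P (all8P H ha) hb.
by rewrite oa.
Qed.

Lemma fin_conj a b : (b < 8)%N -> psi a ((7 * b) %% 8) = psi a b.
Proof.
have H : all8 (fun b => ((7 * b) %% 8 %% 4 != 2)%N == (b %% 4 != 2)%N).
  by vm_compute.
move=> hb; have := all8P H hb; rewrite /psi => /eqP ->//.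
Qed.

Lemma unit_odd x : ok_unit x -> odd (z2d x.1 3).
Proof.
case=> y /(congr1 (fun p => z2d p.1 3)); rewrite r_mul1 (_ : z2d ok_one.1 3 = 1%N) // => e.
exact: (fin_unit _ _ _ _ (r8 _) (r8 _) (r8 _) (r8 _) e).
Qed.

Lemma chi_pm x : chi x = 1 \/ chi x = -1.
Proof. by rewrite /chi; case: ifP; [left|right]. Qed.

Lemma chi_mul x y : ok_unit x -> ok_unit y -> chi (ok_mul x y) = chi x * chi y.
Proof.
move=> /unit_odd ox /unit_odd oy.
rewrite /chi r_mul1 r_mul2 fin_mul ?r8 //.
by case: (psi _ _); case: (psi _ _).
Qed.

Lemma chi_conj x : chi (ok_conj x) = chi x.
Proof. by rewrite /chi r_conj fin_conj ?r8. Qed.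

Lemma chi_Z2 u : Z2unit u -> chi (ok_of_Z2 u) = chi_p u.
Proof.
move=> [w Hw].
have ou : odd (z2d u 3).
  move: (congr1 (fun p => z2d p 3) Hw); rewrite r_z2mul (_ : z2d z2one 3 = 1%N) // => e.
  exact: (fin_unitZ _ _ (r8 _) (r8 _) e).
rewrite /chi (_ : z2d (ok_of_Z2 u).2 3 = 0%N) // (_ : (ok_of_Z2 u).1 = u) //.
have -> : psi (z2d u 3) 0 = ((z2d u 3 == 1)%N || (z2d u 3 == 3)%N).
  by rewrite /psi; case: (_ || _).
rewrite /chi_p; case: ifP => h.
  rewrite asboolT //.
  case/orP: h => /eqP h.
    have [s Hs] := z2_sqrt u h.
    have Nz : ok_norm (s, z2zero) = u.
      apply: pi_eq => n n0; rewrite /ok_norm /z2zero /= -Hs !pis //; ring.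
    exists (s, z2zero); split; last exact: Nz.
    eexists; apply: norm_unit; rewrite Nz; exact: Hw.
  pose v := z2sub u (z2nat 2).
  have hv : z2d v 3 = 1%N.
    have -> : z2d v 3 = ((z2d u 3 + (7 * 2) %% 8) %% 8)%N by [].
    by rewrite h.
  have [s Hs] := z2_sqrt v hv.
  have Nz : ok_norm (s, z2one) = u.
    apply: pi_eq => n n0; have := congr1 (pi n) Hs.
    rewrite /v /z2sub /z2opp /ok_norm /z2one /= !pis // => E.
    rewrite E; ring.
  exists (s, z2one); split; last exact: Nz.
  eexists; apply: norm_unit; rewrite Nz; exact: Hw.
rewrite asboolF // => -[z [[y Hy] Hn]].
have oz := unit_odd z (ex_intro _ y Hy).
have := fin_norm _ _ (r8 z.1) (r8 z.2) oz.
by rewrite -r_norm Hn h.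
Qed.

Theorem mainTheorem5 (alpha_p : Z2) (Halpha : cubic_at alpha_p = z2zero) :
  exists chi : OK2 -> int,
    (forall x, ok_unit x -> chi x = 1%R \/ chi x = (-1)%R) /\
    (forall x y, ok_unit x -> ok_unit y ->
       chi (ok_mul x y) = (chi x * chi y)%R) /\
    (forall u, Z2unit u -> chi (ok_of_Z2 u) = chi_p u) /\
    (forall x, ok_unit x -> chi (ok_conj x) = chi x).
Proof.
exists chi; split; first by move=> x _; exact: chi_pm.
split; first exact: chi_mul.
split; first exact: chi_Z2.
by move=> x _; exact: chi_conj.
Qed.
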